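(* TC-Approval is Pareto optimal, while CO-Approval and UC-Approval are not Pareto optimal.
   Context: A tournament $T=(V(T),\succ)$ is a finite set of candidates with an asymmetric and complete binary relation $\succ$. Tournament solutions: the top cycle $TC(T)$ is the unique minimal nonempty $X\subseteq V(T)$ with $x\succ y$ for all $x\in X$, $y\notin X$; the Copeland set $CO(T)$ is the set of candidates of maximum outdegree; the uncovered set $UC(T)$ is the set of kings, where $a$ is a king if for every $b\neq a$, either $a\succ b$ or there is $c$ with $a\succ c\succ b$. An election $\mathcal{E}=(\mathcal{C},\mathcal{T})$ has a finite candidate set and a finite list of votes, each a tournament on $\mathcal{C}$. For a tournament solution $f$, $f$-Approval gives candidate $c$ score $|\{T\in\mathcal{T}: c\in f(T)\}|$ (with multiplicity); winners are those of highest score. A voting correspondence $\varphi$ is Pareto optimal if for every election $\mathcal{E}=(\mathcal{C},\mathcal{T})$ and every two candidates $a,b$ such that $a\succ b$ in every vote of $\mathcal{T}$, $a\notin\varphi(\mathcal{E})$ implies $b\notin\varphi(\mathcal{E})$. *)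

(* Defs.v *)
From mathcomp Require Import all_boot.
Set Implicit Arguments. Unset Strict Implicit. Unset Printing Implicit Defensive.

Record tournament (C : finType) := Tournament {
  beats : rel C;
  beats_asym : forall x y, beats x y -> ~~ beats y x;
  beats_complete : forall x y, x != y -> beats x y || beats y x
}.

Definition tsolution := forall C : finType, tournament C -> {set C}.

Definition dominant (C : finType) (T : tournament C) (X : {set C}) : bool :=
  [forall x in X, forall y in ~: X, beats T x y].

(* Top cycle: the (unique) minimal nonempty dominant set. *)
Definition TC : tsolution := fun C T =>
  odflt set0 [pick X | minset (fun X : {set C} => (X != set0) && dominant T X) X].

Definition outdeg (C : finType) (T : tournament C) (x : C) : nat :=
  #|[set y | beats T x y]|.

Definition CO : tsolution := fun C T =>
  [set x | [forall y, outdeg T y <= outdeg T x]].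

Definition is_king (C : finType) (T : tournament C) (a : C) : bool :=
  [forall b, (b != a) ==> (beats T a b || [exists c, beats T a c && beats T c b])].

(* Uncovered set = set of kings. *)
Definition UC : tsolution := fun C T => [set a | is_king T a].

Definition approval_score (f : tsolution) (C : finType)
  (votes : seq (tournament C)) (c : C) : nat :=
  count (fun T => c \in f C T) votes.

Definition approval (f : tsolution) (C : finType)
  (votes : seq (tournament C)) : {set C} :=
  [set c | [forall d, approval_score f votes d <= approval_score f votes c]].

Definition voting_corr := forall C : finType, seq (tournament C) -> {set C}.

Definition pareto_optimal (phi : voting_corr) : Prop :=
  forall (C : finType) (votes : seq (tournament C)) (a b : C),
    all (fun T => beats T a b) votes ->
    a \notin phi C votes -> b \notin phi C votes.

(* Main.v *)
Require Import Defs.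
From mathcomp Require Import all_boot.
Set Implicit Arguments. Unset Strict Implicit. Unset Printing Implicit Defensive.

Lemma TC_dom (C : finType) (T : tournament C) (a b : C) :
  beats T a b -> b \in TC T -> a \in TC T.
Proof.
rewrite /TC; case: pickP => [X /= HX|] ; last by rewrite inE.
move=> hab hb; apply/negPn/negP => ha.
move/minsetP: HX => [/andP [_ /forallP Hd] _].
have := Hd b; rewrite hb /= => /forallP /(_ a); rewrite inE ha /= => hba.
by move: (beats_asym hab); rewrite hba.
Qed.

Lemma TC_po : pareto_optimal (approval TC).
Proof.
move=> C votes a b hall; rewrite !inE => /forallPn [d hd]; apply/forallPn; exists d.
rewrite -!ltnNge in hd *; apply: leq_trans hd.
rewrite /approval_score; elim: votes hall => //= T vs IH /andP [hT hv].
apply: leq_add; last exact: IH.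
by case hb: (b \in TC T) => //=; rewrite (TC_dom hT hb).
Qed.

Definition edges1 := [:: (0,1); (1,2); (1,3); (2,0); (3,0); (2,3)].
Definition r1 : rel 'I_4 := fun x y => (nat_of_ord x, nat_of_ord y) \in edges1.
Lemma r1_asym x y : r1 x y -> ~~ r1 y x.
Proof. by case: x => [[|[|[|[|?]]]] ?]; case: y => [[|[|[|[|?]]]] ?]. Qed.
Lemma r1_comp x y : x != y -> r1 x y || r1 y x.
Proof. by case: x => [[|[|[|[|?]]]] ?]; case: y => [[|[|[|[|?]]]] ?]. Qed.
Definition T1 := Tournament r1_asym r1_comp.

Definition edges2 := [:: (0,1); (1,2); (2,3); (3,0); (3,1); (2,0)].
Definition r2 : rel 'I_4 := fun x y => (nat_of_ord x, nat_of_ord y) \in edges2.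
Lemma r2_asym x y : r2 x y -> ~~ r2 y x.
Proof. by case: x => [[|[|[|[|?]]]] ?]; case: y => [[|[|[|[|?]]]] ?]. Qed.
Lemma r2_comp x y : x != y -> r2 x y || r2 y x.
Proof. by case: x => [[|[|[|[|?]]]] ?]; case: y => [[|[|[|[|?]]]] ?]. Qed.
Definition T2 := Tournament r2_asym r2_comp.

Definition i0 : 'I_4 := @Ordinal 4 0 isT.
Definition i1 : 'I_4 := @Ordinal 4 1 isT.

Definition i2 : 'I_4 := @Ordinal 4 2 isT.
Definition i3 : 'I_4 := @Ordinal 4 3 isT.

Lemma forall4 (P : pred 'I_4) : [forall x, P x] = [&& P i0, P i1, P i2 & P i3].
Proof.
apply/forallP/and4P => [H|[h0 h1 h2 h3] x]; first by rewrite !H.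
by case: x => [[|[|[|[|?]]]] ?] //; [move: h0|move: h1|move: h2|move: h3];
  congr (is_true (P _)); apply: val_inj.
Qed.

Lemma exists4 (P : pred 'I_4) : [exists x, P x] = [|| P i0, P i1, P i2 | P i3].
Proof.
apply/negb_inj; rewrite negb_exists forall4 !negb_or.
by [].   
Qed.

Lemma outdeg4 (T : tournament 'I_4) x : outdeg T x =
  beats T x i0 + beats T x i1 + beats T x i2 + beats T x i3.
Proof.
rewrite /outdeg -sum1_card big_mkcond /= !big_ord_recl big_ord0 !inE addn0 !addnA.
have e0 : ord0 = i0 by apply: val_inj.
have e1 : lift ord0 ord0 = i1 by apply: val_inj.
have e2 : lift ord0 (lift ord0 ord0) = i2 :> 'I_4 by apply: val_inj.
have e3 : lift ord0 (lift ord0 (lift ord0 ord0)) = i3 :> 'I_4 by apply: val_inj.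
rewrite e3 e2 e1 e0.
by case: (beats T x i0); case: (beats T x i1); case: (beats T x i2); case: (beats T x i3).
Qed.

Lemma CO_a : (i0 \in approval CO [:: T1]) = false.
Proof. by rewrite inE forall4 /approval_score /= !inE !forall4 !outdeg4. Qed.
Lemma CO_b : (i1 \in approval CO [:: T1]) = true.
Proof. by rewrite inE forall4 /approval_score /= !inE !forall4 !outdeg4. Qed.
Lemma UC_a : (i0 \in approval UC [:: T2]) = false.
Proof. by rewrite inE forall4 /approval_score /= !inE /is_king !forall4 !exists4. Qed.
Lemma UC_b : (i1 \in approval UC [:: T2]) = true.
Proof. by rewrite inE forall4 /approval_score /= !inE /is_king !forall4 !exists4. Qed.
Theorem theorem4 :
  pareto_optimal (approval TC) /\
  ~ pareto_optimal (approval CO) /\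
  ~ pareto_optimal (approval UC).
Proof.
split; first exact: TC_po.
split=> H.
  by move: (H _ [:: T1] i0 i1 isT); rewrite CO_a CO_b => /(_ isT).
by move: (H _ [:: T2] i0 i1 isT); rewrite UC_a UC_b => /(_ isT).
Qed.
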